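(* Let $\alpha\ge0$ and $n>\alpha$. Let $B_r$ be the event that $\mathscr{G}(n,\alpha/n)$ has no connected component with more than $r$ vertices and let $L$ be the event that all connected components of $\mathscr{G}(n,\alpha/n)$ are trees. Then for all $r\ge1$, \[ P_{n,\alpha}(B_r)\le P_{n,\alpha}(L)\Bigl(1-\frac{\alpha}{n}\Bigr)^{-\frac12 rn}. \]
   Context: $\mathscr{G}(n,p)$ is the random graph on vertex set $\{1,\dots,n\}$ in which each of the $\binom n2$ unordered pairs is an edge independently with probability $p$; here $p=\alpha/n$, and $P_{n,\alpha}$ is the corresponding probability measure. *)

(* Defs.v *)
From HB Require Import structures.
From mathcomp Require Import all_boot all_order all_algebra.
From mathcomp Require Import boolp reals exp.
Set Implicit Arguments. Unset Strict Implicit. Unset Printing Implicit Defensive.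
Import Order.TTheory GRing.Theory Num.Theory.
Local Open Scope ring_scope.

(* A simple graph on vertex set 'I_n (= {1..n} shifted) is a set of
   unordered pairs, i.e. a subset of [pairs n]. *)
Definition pairs (n : nat) : {set {set 'I_n}} := [set e : {set 'I_n} | #|e| == 2%N].

Definition is_graph (n : nat) (E : {set {set 'I_n}}) : bool := E \subset pairs n.

Definition adj (n : nat) (E : {set {set 'I_n}}) : rel 'I_n :=
  fun x y => [set x; y] \in E.

Definition component (n : nat) (E : {set {set 'I_n}}) (v : 'I_n) : {set 'I_n} :=
  [set w | connect (adj E) v w].

Definition graph_cycle (n : nat) (E : {set {set 'I_n}}) (s : seq 'I_n) : bool :=
  [&& uniq s, (3 <= size s)%N & cycle (adj E) s].

(* the component of v is a tree: it is connected (by construction) and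
   contains no cycle *)
Definition component_is_tree (n : nat) (E : {set {set 'I_n}}) (v : 'I_n) : Prop :=
  forall s : seq 'I_n, all (fun w => w \in component E v) s -> ~~ graph_cycle E s.

Definition event_B (n r : nat) (E : {set {set 'I_n}}) : Prop :=
  forall v : 'I_n, (#|component E v| <= r)%N.

Definition event_L (n : nat) (E : {set {set 'I_n}}) : Prop :=
  forall v : 'I_n, component_is_tree E v.

Definition Pgnp {R : realFieldType} (n : nat) (p : R)
  (A : {set {set 'I_n}} -> Prop) : R :=
  \sum_(E : {set {set 'I_n}} | is_graph E && `[< A E >])
     p ^+ #|E| * (1 - p) ^+ (#|pairs n| - #|E|).
Arguments Pgnp {R} n p A.

(* Main.v *)
Require Import Defs.
From HB Require Import structures.
From mathcomp Require Import all_boot all_order all_algebra.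
From mathcomp Require Import boolp reals exp.
From mathcomp Require Import zify.
Import Order.TTheory GRing.Theory Num.Theory.
Set Implicit Arguments. Unset Strict Implicit. Unset Printing Implicit Defensive.

Section G.
Variable n : nat.
Implicit Types E F : {set {set 'I_n}}.

Lemma adj_sym E : symmetric (adj E).
Proof. by move=> x y; rewrite /adj setUC. Qed.

Definition conn_eq F E := [forall x, forall y, connect (adj F) x y == connect (adj E) x y].

Lemma conn_eqP F E : reflect (forall x y, connect (adj F) x y = connect (adj E) x y) (conn_eq F E).
Proof.
apply: (iffP forallP) => [h x y|h x]; first by have /forallP/(_ y)/eqP := h x.
by apply/forallP => y; rewrite h.
Qed.

Definition fsp E := arg_min E (fun F => (F \subset E) && conn_eq F E) (fun F => #|F|).

Lemma fsp_spec E : [/\ fsp E \subset E, conn_eq (fsp E) E &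
   forall F, F \subset E -> conn_eq F E -> (#|fsp E| <= #|F|)%N].
Proof.
rewrite /fsp; case: arg_minnP.
- by rewrite subxx /=; apply/conn_eqP.
move=> F /andP[h1 h2] h3; split=> // G h4 h5; apply: h3; by rewrite h4.
Qed.

Lemma cycle_remove F s : graph_cycle F s ->
  exists e, e \in F /\ conn_eq (F :\ e) F.
Proof.
case/and3P => + + +; case: s => [|s0 [|s1 [|t0 t]]] //= Hu _.
move=> /and3P[h01 h1t hp].
move: Hu; rewrite !inE !negb_or => /and4P[/and3P[ne01 ne0t0 s0t] /andP[ne1t0 s1t] _ _].
exists [set s0; s1]; split => //.
have key : connect (adj (F :\ [set s0; s1])) s1 s0.
  apply/connectP; exists (t0 :: rcons t s0); last by rewrite /= last_rcons.
  rewrite /= {1}/adj !inE; move: h1t; rewrite /adj => ->; rewrite andbT.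
  apply/andP; split.
    apply/negP => /eqP/setP/(_ s0); rewrite !inE eqxx /=.
    by rewrite (negbTE ne01) (negbTE ne0t0).
  apply: (@sub_in_path _ (predC1 s1) (adj F)); last by [].
    move=> a b; rewrite !inE => na nb; rewrite /adj /= => ->; rewrite andbT.
    apply/negP => /eqP/setP/(_ s1); rewrite !inE eqxx orbT.
    by rewrite eq_sym (negbTE na) eq_sym (negbTE nb).
  rewrite /= all_rcons /=; apply/and3P; split; [by rewrite eq_sym | by [] | ].
  by apply/allP => x xt /=; apply: contraNneq s1t => <-.
apply/conn_eqP => x y; apply/idP/idP.
  apply: connect_sub => a b; rewrite /adj inE => /andP[_ h]; exact: connect1.
apply: connect_sub => a b hab.
have [->|nab] := eqVneq a b; first exact: connect0.
have [he|ne] := eqVneq [set a; b] [set s0; s1]; last first.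
  by apply: connect1; rewrite /adj !inE ne.
have ha : a \in [set s0; s1] by rewrite -he !inE eqxx.
have hb : b \in [set s0; s1] by rewrite -he !inE eqxx orbT.
move: ha hb; rewrite !inE => /orP[]/eqP-> /orP[]/eqP->; rewrite ?eqxx // in nab *.
by rewrite (sym_connect_sym (adj_sym _)) key.
Qed.

Lemma conn_eq_trans F G E : conn_eq F G -> conn_eq G E -> conn_eq F E.
Proof. by move=> /conn_eqP h1 /conn_eqP h2; apply/conn_eqP => x y; rewrite h1 h2. Qed.

Lemma fsp_L E : event_L (fsp E).
Proof.
move=> v s _; apply/negP => /cycle_remove [e [eF hc]].
have [h1 h2 h3] := fsp_spec E.
have := h3 (fsp E :\ e); rewrite (subset_trans (subD1set _ _) h1) => /(_ isT).
rewrite (conn_eq_trans hc h2) => /(_ isT).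
by rewrite (cardsD1 e (fsp E)) eF add1n ltnn.
Qed.

Lemma fsp_graph E : is_graph E -> is_graph (fsp E).
Proof. have [h1 _ _] := fsp_spec E; exact: subset_trans. Qed.

Lemma fsp_comp E v : component (fsp E) v = component E v.
Proof.
have [_ /conn_eqP h _] := fsp_spec E.
by apply/setP => w; rewrite !inE h.
Qed.

Lemma fsp_B r E : event_B r E -> event_B r (fsp E).
Proof. by move=> h v; rewrite fsp_comp. Qed.

Definition W F : {set {set 'I_n}} :=
  [set e in pairs n | [forall x in e, forall y in e, connect (adj F) x y]].

Lemma fsp_sub E : is_graph E -> E \subset fsp E :|: (W (fsp E) :\: fsp E).
Proof.
move=> gE; have [_ /conn_eqP h _] := fsp_spec E.
apply/subsetP => e eE; rewrite !inE; apply/orP.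
case: (boolP (e \in fsp E)) => eF; [by left | right]; rewrite ?eF /=.
have ep : e \in pairs n by apply: (subsetP gE).
move: (ep); rewrite inE => c2; move: (c2) => /cards2P [a [b [_ ee]]].
rewrite c2 /=; subst e.
have hab : connect (adj E) a b by apply: connect1.
have hba : connect (adj E) b a by rewrite (sym_connect_sym (adj_sym _)).
apply/forallP => x; apply/implyP => hx; apply/forallP => y; apply/implyP => hy.
rewrite h; move: hx hy; rewrite !inE => /orP[]/eqP-> /orP[]/eqP->; by rewrite ?connect0.
Qed.

Lemma W_card r F : event_B r F -> (#|W F| * 2 <= n * r)%N.
Proof.
move=> hB.
have -> : (#|W F| * 2 = \sum_(e in W F) \sum_(x in e) 1)%N.
  rewrite -sum_nat_const; apply: eq_bigr => e; rewrite inE => /andP[].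
  by rewrite inE => /eqP <- _; rewrite sum1_card.
rewrite (exchange_big_dep predT) //=.
have -> : (n * r = \sum_(x : 'I_n) r)%N by rewrite sum_nat_const card_ord.
apply: leq_sum => x _.
rewrite sum1dep_card; apply: leq_trans (hB x).
apply: leq_trans (leq_imset_card (fun y => [set x; y]) _); apply: subset_leq_card.
apply/subsetP => e; rewrite inE => /andP[]; rewrite inE => /andP[].
rewrite inE => /cards2P [a [b [nab ->]]] hc; rewrite !inE => /orP[]/eqP ->.
  apply/imsetP; exists b => //; rewrite inE.
  by move/forallP: hc => /(_ a); rewrite !inE eqxx /= => /forallP /(_ b); rewrite !inE eqxx orbT.
apply/imsetP; exists a; last by rewrite setUC.
rewrite inE.
by move/forallP: hc => /(_ b); rewrite !inE eqxx orbT /= => /forallP /(_ a); rewrite !inE eqxx.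
Qed.

End G.

Local Open Scope ring_scope.
Lemma sum_subsets (R : comNzRingType) (T : finType) (p q : R) (D : {set T}) :
  \sum_(X : {set T} | X \subset D) p ^+ #|X| * q ^+ (#|D| - #|X|) = (p + q) ^+ #|D|.
Proof.
move: {2}#|D| (erefl #|D|) => k; elim: k D => [|k IH] D hD.
  have D0 : D = set0 by apply/eqP; rewrite -cards_eq0 hD.
  rewrite (eq_bigl (pred1 set0)) ?big_pred1_eq ?cards0 ?hD ?expr0 ?mulr1 //.
  by move=> X; rewrite D0 subset0.
have [x xD] : exists x, x \in D.
  by apply/set0Pn; rewrite -card_gt0 hD.
have hD' : #|D :\ x| = k by move: hD; rewrite (cardsD1 x) xD add1n => -[].
rewrite hD (bigID (fun X : {set T} => x \in X)) /=.
rewrite (reindex_onto (fun Y => x |: Y) (fun X => X :\ x)) /=; last first.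
  by move=> X /andP[_ ?]; rewrite setD1K.
rewrite (eq_bigl (fun Y : {set T} => Y \subset D :\ x)); last first.
  move=> Y; rewrite subsetD1 subUset sub1set xD setU11 /=.
  case: (boolP (x \in Y)) => xY /=; last by rewrite setU1K // eqxx !andbT.
  have -> : ((x |: Y) :\ x == Y) = false.
    by apply/negbTE/eqP => /setP /(_ x); rewrite !inE eqxx xY.
  by rewrite !andbF.
rewrite (eq_bigl (fun X : {set T} => X \subset D :\ x) (P1 := fun X : {set T} => (X \subset D) && (x \notin X))); last first.
  by move=> X; rewrite subsetD1.
have IH' := IH _ hD'; rewrite hD' in IH'.
rewrite exprS mulrDl -!IH' !big_distrr /=; congr (_ + _); apply: eq_bigr => X hX.
  have xX : x \notin X by move: hX; rewrite subsetD1 => /andP[].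
  have hk : (#|X| <= k)%N by rewrite -hD' subset_leq_card.
  rewrite cardsU1 xX add1n subSS exprS mulrA.
  by rewrite [p * _]mulrC -mulrA.
have hk : (#|X| <= k)%N by rewrite -hD' subset_leq_card.
by rewrite subSn // exprS mulrCA.
Qed.

From mathcomp Require Import lra.
Local Open Scope ring_scope.

Theorem lemma5p1 (R : realType) (alpha : R) (n r : nat)
  (halpha : 0 <= alpha) (hn : alpha < n%:R) (hr : (1 <= r)%N) :
  Pgnp n (alpha / n%:R) (event_B r)
  <= Pgnp n (alpha / n%:R) (@event_L n)
     * (1 - alpha / n%:R) `^ (- ((r * n)%:R / 2)).
Proof.
have n0 : (0 < n)%N by rewrite lt0n; apply/negP => /eqP n0; move: hn; rewrite n0; lra.
have nR : 0 < n%:R :> R by rewrite ltr0n.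
set p := alpha / n%:R.
have p0 : 0 <= p by rewrite divr_ge0 // ltW.
have p1 : p < 1 by rewrite ltr_pdivrMr // mul1r.
set q := 1 - p.
have q0 : 0 < q by rewrite subr_gt0.
have q1 : q <= 1 by rewrite lerBlDr lerDl.
set c := q `^ (- ((r * n)%:R / 2)).
set N := #|pairs n|.
set w := fun E : {set {set 'I_n}} => p ^+ #|E| * q ^+ (N - #|E|).
have w0 : forall E, 0 <= w E by move=> E; rewrite mulr_ge0 // exprn_ge0 // ltW.
rewrite /Pgnp -/N -/q -/c.
rewrite (partition_big (@fsp n) (fun F => is_graph F && `[< event_L F >])); last first.
  move=> E /andP[gE _]; rewrite fsp_graph //=; apply/asboolT; exact: fsp_L.
rewrite big_distrl /=; apply: ler_sum => F /andP[gF _].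
case: (pickP (fun E => (is_graph E && `[< event_B r E >]) && (fsp E == F))) => [E0|none]; last first.
  rewrite big_pred0 // mulr_ge0 // ?powR_ge0 //; exact: w0.
move=> /andP[/andP[gE0 /asboolP BE0] /eqP FE0].
have BF : event_B r F by rewrite -FE0; exact: fsp_B.
set D := W F :\: F.
have hW := W_card BF.
have DF : forall e, e \in D -> e \notin F by move=> e; rewrite inE => /andP[].
change (\sum_(i | (is_graph i && `[< event_B r i >]) && (fsp i == F)) w i <= w F * c).
apply: (@le_trans _ _ (\sum_(E : {set {set 'I_n}} | (F \subset E) && (E \subset F :|: D)) w E)).
  rewrite [X in X <= _]big_mkcond [X in _ <= X]big_mkcond /=; apply: ler_sum => E _.
  case: ifP => [/andP[/andP[gE _] /eqP fE]|_]; last by case: ifP.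
  have [h1 _ _] := fsp_spec E.
  by rewrite /D -fE h1 /= fsp_sub.
rewrite (reindex_onto (fun X => F :|: X) (fun E => E :\: F)) /=; last first.
  move=> E /andP[FE _]; apply/setP => e; rewrite !inE.
  by case: (boolP (e \in F)) => //= eF; rewrite (subsetP FE).
rewrite (eq_bigl (fun X : {set {set 'I_n}} => X \subset D)); last first.
  move=> X; apply/idP/idP.
    move=> /andP[/andP[_ h1] /eqP h2]; apply/subsetP => e eX.
    have : e \in (F :|: X) :\: F by rewrite h2.
    rewrite inE => /andP[eF eFX].
    by move: (subsetP h1 e eFX); rewrite inE (negbTE eF).
  move=> XD; rewrite subsetUl setUS //=; apply/eqP/setP => e; rewrite !inE.
  case: (boolP (e \in X)) => eX; last by rewrite orbF andNb.
  by rewrite orbT andbT (DF _ (subsetP XD _ eX)).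
have cFU : forall X : {set {set 'I_n}}, X \subset D -> #|F :|: X| = (#|F| + #|X|)%N.
  move=> X XD; rewrite cardsU; suff -> : F :&: X = set0 by rewrite cards0 subn0.
  apply/setP => e; rewrite !inE; case: (boolP (e \in X)) => eX; last by rewrite andbF.
  by rewrite andbT; apply/negbTE; exact: DF (subsetP XD _ eX).
have hN : (#|F| + #|D| <= N)%N.
  rewrite -cFU //; apply: subset_leq_card; apply/subsetP => e.
  rewrite inE => /orP[eF|eD]; first exact: (subsetP gF).
  by move: eD; rewrite !inE => /andP[_ /andP[]].
set M := (N - #|F| - #|D|)%N.
have -> : \sum_(X : {set {set 'I_n}} | X \subset D) w (F :|: X)
    = p ^+ #|F| * q ^+ M * \sum_(X : {set {set 'I_n}} | X \subset D) p ^+ #|X| * q ^+ (#|D| - #|X|).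
  rewrite big_distrr; apply: eq_bigr => X XD; rewrite /w cFU //.
  have hX : (#|X| <= #|D|)%N by apply: subset_leq_card.
  have -> : (N - (#|F| + #|X|) = M + (#|D| - #|X|))%N by rewrite /M; lia.
  by rewrite !exprD mulrACA.
have pq : p + q = 1 by rewrite /q addrCA subrr addr0.
rewrite sum_subsets pq expr1n mulr1.
rewrite /w.
have -> : (N - #|F| = M + #|D|)%N by rewrite /M; lia.
rewrite exprD -!mulrA; apply: ler_wpM2l; first exact: exprn_ge0.
rewrite -{1}[q ^+ M]mulr1; apply: ler_wpM2l; first by rewrite exprn_ge0 // ltW.
have hD : (#|D| * 2 <= r * n)%N.
  have : (#|D| <= #|W F|)%N by apply: subset_leq_card; apply: subsetDl.
  move: hW; lia.
have hDR : #|D|%:R <= (r * n)%:R / 2 :> R.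
  have : (#|D| * 2)%:R <= (r * n)%:R :> R by rewrite ler_nat.
  rewrite natrM; lra.
have hc : q ^- #|D| <= c.
  rewrite -powR_invn; last exact: ltW.
  rewrite /c; apply: ger_powR; first by rewrite q0 q1.
  by rewrite lerN2.
apply: le_trans (ler_wpM2l _ hc); last by rewrite exprn_ge0 // ltW.
by rewrite mulrV // unitfE expf_neq0 // gt_eqF.
Qed.
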